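(* For every $\alpha\in[0,1)$ and every integer $n\ge2$, the kernel $K_\alpha(x,y)=\dfrac{1}{x^2+2\cos(\pi\alpha)xy+y^2}$ on $(0,+\infty)^2$ satisfies $K_\alpha\in\mathrm{TP}_n\iff K_\alpha\in\mathrm{SR}_n$.
   Context: A kernel $K$ on $I\times I$ is $\mathrm{TP}_n$ if $\det[K(x_i,y_j)]_{1\le i,j\le m}\ge0$ for every $m\in\{1,\ldots,n\}$ and all $x_1<\cdots<x_m$, $y_1<\cdots<y_m$ in $I$; it is $\mathrm{SR}_n$ if there exist $\varepsilon_1,\ldots,\varepsilon_n\in\{-1,1\}$ with $\varepsilon_m\det[K(x_i,y_j)]_{1\le i,j\le m}\ge0$ for all such $m$ and points. *)

(* Defs.v *)
From HB Require Import structures.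
From mathcomp Require Import all_boot all_order all_algebra.
From mathcomp Require Import all_classical all_reals all_analysis.
Set Implicit Arguments. Unset Strict Implicit. Unset Printing Implicit Defensive.
Import Order.TTheory GRing.Theory Num.Theory.
Local Open Scope ring_scope.

Definition kernel (R : realType) := R -> R -> R.

Definition incr_in (R : realType) (I : R -> Prop) (m : nat) (x : 'I_m -> R) :=
  (forall i, I (x i)) /\ (forall i j : 'I_m, (i < j)%N -> x i < x j).

Definition kminor (R : realType) (K : kernel R) (m : nat) (x y : 'I_m -> R) : R :=
  \det (\matrix_(i < m, j < m) K (x i) (y j)).

Definition TP_n (R : realType) (I : R -> Prop) (n : nat) (K : kernel R) : Prop :=
  forall m : nat, (1 <= m <= n)%N ->
  forall x y : 'I_m -> R, incr_in I x -> incr_in I y -> 0 <= kminor K x y.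

Definition SR_n (R : realType) (I : R -> Prop) (n : nat) (K : kernel R) : Prop :=
  exists eps : nat -> R,
    (forall m : nat, (1 <= m <= n)%N -> eps m = 1 \/ eps m = -1) /\
    (forall m : nat, (1 <= m <= n)%N ->
     forall x y : 'I_m -> R, incr_in I x -> incr_in I y -> 0 <= eps m * kminor K x y).

Definition K_alpha (R : realType) (alpha : R) : kernel R :=
  fun x y => 1 / (x ^+ 2 + 2 * cos (pi * alpha) * x * y + y ^+ 2).

Definition pos_halfline (R : realType) : R -> Prop := fun x => 0 < x.

(* Main.v *)
Require Import Defs.
From HB Require Import structures.
From mathcomp Require Import all_boot all_order all_algebra.
From mathcomp Require Import all_classical all_reals all_analysis.
From mathcomp Require Import fingroup perm ring lra.
Import Order.TTheory GRing.Theory Num.Theory.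
Set Implicit Arguments. Unset Strict Implicit.
Local Open Scope ring_scope.

Lemma cos_gtN1 (R : realType) (a : R) : 0 <= a -> a < 1 -> -1 < cos (pi * a).
Proof.
move=> a0 a1; rewrite -(cospi R).
have hp := pi_gt0 R.
rewrite ltr_cos //.
- by rewrite -[X in _ < X]mulr1 ltr_pM2l.
- rewrite in_itv /= mulr_ge0 ?(ltW hp) //= -[X in _ <= X]mulr1 ler_pM2l //; exact: ltW.
- by rewrite in_itv /= lexx (ltW hp).
Qed.

Lemma denom_lb (R : realType) (c x y : R) : -1 < c -> c <= 1 -> 0 < x -> 0 < y ->
  (1 + c) / 2 * (x ^+ 2 + y ^+ 2) <= x ^+ 2 + 2 * c * x * y + y ^+ 2.
Proof.
move=> c1 c2 x0 y0.
have h1 : 0 <= (1 - c) / 2 * (x - y) ^+ 2 by apply: mulr_ge0; [lra| exact: sqr_ge0].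
have h2 : 0 <= (1 + c) * x * y by rewrite -mulrA mulr_ge0 //; [lra| apply: mulr_ge0; lra].
have -> : x ^+ 2 + 2 * c * x * y + y ^+ 2 = (1 + c) / 2 * (x ^+ 2 + y ^+ 2) + ((1 - c) / 2 * (x - y) ^+ 2 + (1 + c) * x * y) by field.
by rewrite lerDl addr_ge0.
Qed.

Lemma sum_max m (s : 'S_m) : s != 1%g ->
  (\sum_(i < m) (i : nat) + 1 <= \sum_(i < m) maxn i (s i))%N.
Proof.
move=> hs.
have [i0 Hi0] : exists i0, s i0 != i0.
  apply/existsP; apply: contraR hs; rewrite negb_exists => /forallP H.
  apply/eqP/permP => i; rewrite perm1; have := H i; by rewrite negbK => /eqP.
have Hsum : \sum_(i < m) (i : nat) = \sum_(i < m) (s i : nat).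
  exact: (reindex_inj (@perm_inj _ s)).
case: (ltngtP (s i0) i0) => h.
- rewrite Hsum (bigD1 i0) //= [X in (_ <= X)%N](bigD1 i0) //= addnAC leq_add //.
    by rewrite addn1 leq_max h ?orbT.
  by apply: leq_sum => i _; rewrite leq_max leqnn orbT.
- rewrite (bigD1 i0) //= [X in (_ <= X)%N](bigD1 i0) //= addnAC leq_add //.
    by rewrite addn1 leq_max h ?orbT.
  by apply: leq_sum => i _; rewrite leq_max leqnn.
- by move: Hi0; rewrite -(inj_eq val_inj) /= h eqxx.
Qed.

Definition Kc {R : realType} (c : R) : R -> R -> R :=
  fun x y => 1 / (x ^+ 2 + 2 * c * x * y + y ^+ 2).

Lemma Kc_pos (R : realType) (c x y : R) : -1 < c -> c <= 1 -> 0 < x -> 0 < y -> 0 < Kc c x y.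
Proof.
move=> c1 c2 x0 y0; rewrite /Kc div1r invr_gt0.
apply: (lt_le_trans _ (denom_lb c1 c2 x0 y0)).
apply: mulr_gt0; first lra.
by apply: addr_gt0; apply: exprn_gt0.
Qed.

Lemma entry_ub (R : realType) (c t : R) (i j : nat) : -1 < c -> c <= 1 -> 0 < t ->
  Kc c (t ^+ i) (t ^+ j) <= 2 / (1 + c) * ((t ^+ 2)^-1) ^+ (maxn i j).
Proof.
move=> c1 c2 t0.
have X0 : 0 < t ^+ i by apply: exprn_gt0.
have Y0 : 0 < t ^+ j by apply: exprn_gt0.
have hd := denom_lb c1 c2 X0 Y0.
have hc : 0 < (1 + c) / 2 by lra.
have key : forall k, (k = i \/ k = j) -> Kc c (t ^+ i) (t ^+ j) <= 2 / (1 + c) * ((t ^+ 2)^-1) ^+ k.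
  move=> k hk.
  have Z0 : 0 < (t ^+ k) ^+ 2 by apply: exprn_gt0; apply: exprn_gt0.
  rewrite exprVn -exprM mulnC exprM.
  have -> : 2 / (1 + c) * ((t ^+ k) ^+ 2)^-1 = ((1 + c) / 2 * (t ^+ k) ^+ 2)^-1.
    by field; rewrite expf_neq0 ?gt_eqF //=; lra.
  rewrite /Kc div1r lef_pV2 ?posrE //; last by apply: mulr_gt0.
    apply: le_trans hd; rewrite ler_pM2l //.
    case: hk => ->; [rewrite lerDl | rewrite lerDr]; exact: sqr_ge0.
  by apply: (lt_le_trans _ hd); apply: mulr_gt0 => //; apply: addr_gt0; apply: exprn_gt0.
case: (leqP i j) => h.
  by apply: key; right.
by apply: key; left.
Qed.

Lemma entry_diag (R : realType) (c t : R) (i : nat) : -1 < c -> c <= 1 -> 0 < t ->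
  1 / 4 * ((t ^+ 2)^-1) ^+ i <= Kc c (t ^+ i) (t ^+ i).
Proof.
move=> c1 c2 t0.
have Z0 : 0 < (t ^+ i) ^+ 2 by apply: exprn_gt0; apply: exprn_gt0.
rewrite exprVn -exprM mulnC exprM.
have -> : 1 / 4 * ((t ^+ i) ^+ 2)^-1 = (4 * (t ^+ i) ^+ 2)^-1.
  by field; rewrite expf_neq0 ?gt_eqF.
have -> : Kc c (t ^+ i) (t ^+ i) = ((2 + 2 * c) * (t ^+ i) ^+ 2)^-1.
  by rewrite /Kc div1r expr2; congr (_^-1); ring.
rewrite lef_pV2 ?posrE.
- by rewrite ler_pM2r //; lra.
- by apply: mulr_gt0 => //; lra.
- by apply: mulr_gt0 => //; lra.
Qed.

Lemma det_pos (R : realType) (c : R) (m : nat) : -1 < c -> c <= 1 ->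
  exists t : R, 1 < t /\ 0 < \det (\matrix_(i < m, j < m) Kc c (t ^+ i) (t ^+ j)).
Proof.
move=> c1 c2.
set e := 2 / (1 + c).
have e1 : 1 <= e by rewrite /e ler_pdivlMr; lra.
set P : R := (m`!)%:R * (4 * e) ^+ m.
have P1 : 1 <= P.
  apply: mulr_ege1; first by rewrite ler1n fact_gt0.
  by apply: exprn_ege1; lra.
exists (1 + P); split; first lra.
set t := 1 + P.
have t0 : 0 < t by rewrite /t; lra.
have t1 : 1 <= t by rewrite /t; lra.
set w := (t ^+ 2)^-1.
have w0 : 0 < w by rewrite /w invr_gt0 exprn_gt0.
have w1 : w <= 1 by rewrite /w invf_le1 ?exprn_gt0 // exprn_ege1.
set S := (\sum_(i < m) (i : nat))%N.
set A := \matrix_(i < m, j < m) Kc c (t ^+ i) (t ^+ j).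
have HA : forall i j, A i j = Kc c (t ^+ i) (t ^+ j) by move=> i j; rewrite mxE.
have e0 : 0 < e by lra.
have Hw : (m`!)%:R * e ^+ m * w < (1 / 4) ^+ m.
  have HPw : P * w < 1.
    rewrite /w ltr_pdivrMr ?exprn_gt0 // mul1r expr2.
    rewrite /t; nra.
  have -> : (m`!)%:R * e ^+ m * w = (1 / 4) ^+ m * (P * w).
    have h4 : (1 / 4) ^+ m * 4 ^+ m = 1 :> R.
      by rewrite -exprMn div1r mulVf ?expr1n.
    rewrite /P [(4 * e) ^+ m]exprMn -[LHS]mul1r -{1}h4; ring.
  by rewrite gtr_pMr ?exprn_gt0 //; lra.
rewrite /determinant (bigD1 1%g) //= odd_perm1 expr0 mul1r.
have Hdiag : (1 / 4) ^+ m * w ^+ S <= \prod_i A i ((1%g : 'S_m) i).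
  rewrite (eq_bigr (fun i : 'I_m => Kc c (t ^+ i) (t ^+ i))); last by move=> i _; rewrite perm1 HA.
  have -> : (1 / 4) ^+ m * w ^+ S = \prod_(i < m) (1 / 4 * w ^+ i).
    by rewrite big_split /= prodr_const card_ord prodrXr.
  apply: ler_prod => i _; rewrite mulr_ge0 ?exprn_ge0 ?(ltW w0) //=.
  exact: entry_diag.
have Hoff : forall s : 'S_m, s != 1%g ->
    - (e ^+ m * w ^+ S.+1) <= (-1) ^+ s * \prod_i A i (s i).
  move=> s hs.
  have Hp0 : 0 <= \prod_i A i (s i).
    by apply: prodr_ge0 => i _; rewrite HA ltW // Kc_pos // exprn_gt0.
  have Hpb : \prod_i A i (s i) <= e ^+ m * w ^+ S.+1.
    apply: (le_trans (y := \prod_(i < m) (e * w ^+ maxn i (s i)))).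
      apply: ler_prod => i _; rewrite HA (ltW (Kc_pos _ _ _ _)) ?exprn_gt0 //=.
      exact: entry_ub.
    rewrite big_split /= prodr_const card_ord prodrXr ler_pM2l ?exprn_gt0 //.
    apply: ler_wiXn2l; [exact: ltW | exact: w1 | ].
    by rewrite -addn1; apply: sum_max.
  case: (odd_perm s); rewrite /= ?expr1 ?expr0 ?mulN1r ?mul1r; lra.
have Hsum : - ((m`!)%:R * (e ^+ m * w ^+ S.+1)) <=
    \sum_(s : 'S_m | s != 1%g) (-1) ^+ s * \prod_i A i (s i).
  apply: (le_trans _ (ler_sum _ Hoff)).
  rewrite sumrN lerN2.
  have B0 : 0 <= e ^+ m * w ^+ S.+1 by rewrite mulr_ge0 ?exprn_ge0 // ltW.
  have -> : (m`!)%:R * (e ^+ m * w ^+ S.+1) = \sum_(s : 'S_m) (e ^+ m * w ^+ S.+1).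
    by rewrite sumr_const card_Sn mulr_natl.
  by rewrite [leRHS](bigD1 1%g) //= lerDr.
have Hpos : 0 < w ^+ S * ((1 / 4) ^+ m - (m`!)%:R * e ^+ m * w).
  by rewrite mulr_gt0 ?exprn_gt0 // subr_gt0.
have Heq : w ^+ S * ((1 / 4) ^+ m - (m`!)%:R * e ^+ m * w) =
   (1 / 4) ^+ m * w ^+ S - (m`!)%:R * (e ^+ m * w ^+ S.+1).
  by rewrite exprSr; ring.
rewrite Heq in Hpos.
by apply: (lt_le_trans Hpos); apply: lerD.
Qed.

Unset Implicit Arguments.

Theorem corollary1 (R : realType) (alpha : R) (n : nat) :
  0 <= alpha -> alpha < 1 -> (2 <= n)%N ->
  (TP_n (@pos_halfline R) n (K_alpha alpha) <-> SR_n (@pos_halfline R) n (K_alpha alpha)).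
Proof.
move=> a0 a1 _.
have c1 := cos_gtN1 a0 a1.
have c2 : cos (pi * alpha) <= 1 by apply: cos_le1.
split.
  move=> H; exists (fun _ => 1); split; first by move=> *; left.
  by move=> m hm x y hx hy; rewrite mul1r; apply: H.
move=> [eps [He H]] m hm x y hx hy.
case: (He m hm) => E.
  by have := H m hm x y hx hy; rewrite E mul1r.
have [t [t1 hdet]] := @det_pos R (cos (pi * alpha)) m c1 c2.
pose z : 'I_m -> R := fun i => t ^+ i.
have hz : incr_in (@pos_halfline R) z.
  split; first by move=> i; rewrite /pos_halfline /z exprn_gt0 //; lra.
  by move=> i j hij; rewrite /z ltr_eXn2l.
have := H m hm z z hz hz; rewrite E mulN1r oppr_ge0.
have -> : kminor (K_alpha alpha) z z = \det (\matrix_(i < m, j < m) Kc (cos (pi * alpha)) (t ^+ i) (t ^+ j)) by [].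
by rewrite leNgt hdet.
Qed.
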